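(* Fix a proper norm on $\mathbb Q$. Then $\ell^1(\mathbb Q)\sqsubseteq^{\mathbb Q}\mathbb R$ but $\mathbb R\not\sqsubseteq^{\mathbb Q}\ell^1(\mathbb Q)$, where $\mathbb R$ is regarded as a Polish $\mathbb Q$-vector space with its usual topology.
   Context: A norm on a ring $R$ is a function $|\cdot|\colon R\to[0,\infty)$ such that $(a,b)\mapsto|a-b|$ is a metric and $|rs|\le|r||s|$; it is proper if every closed ball is compact (a proper norm on $\mathbb Q$ induces the discrete topology). $\ell^1(\mathbb Q)=\{(q_k)_{k\in\mathbb N}\in\mathbb Q^{\mathbb N}:\sum_k|q_k|/k!<\infty\}$ with norm $\sum_k|q_k|/k!$. $M\sqsubseteq^{\mathbb Q}N$ means there is a continuous $\mathbb Q$-linear injection $M\to N$. *)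

(* Defs.v *)
From Stdlib Require Import Reals List.
From Coquelicot Require Import Coquelicot.
From mathcomp Require Import all_boot all_algebra.
From mathcomp Require Import Rstruct.

Set Implicit Arguments.
Unset Strict Implicit.
Unset Printing Implicit Defensive.
Local Open Scope R_scope.

Definition qadd (a b : rat) : rat := GRing.add a b.
Definition qsub (a b : rat) : rat := GRing.add a (GRing.opp b).
Definition qmul (a b : rat) : rat := GRing.mul a b.
Definition QtoR (q : rat) : R := @ratr R q.

Definition is_ring_norm (N : rat -> R) : Prop :=
  (forall x, (0 <= N x)) /\
  (forall a b, N (qsub a b) = 0 <-> a = b) /\
  (forall a b, N (qsub a b) = N (qsub b a)) /\
  (forall a b c, (N (qsub a c) <= N (qsub a b) + N (qsub b c))) /\
  (forall r s, (N (qmul r s) <= N r * N s)).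

Definition openQ (N : rat -> R) (U : rat -> Prop) : Prop :=
  forall x, U x -> exists e : R, (0 < e) /\ forall y, (N (qsub y x) < e) -> U y.

Definition compactQ (N : rat -> R) (K : rat -> Prop) : Prop :=
  forall (I : Type) (U : I -> rat -> Prop),
    (forall i, openQ N (U i)) ->
    (forall x, K x -> exists i, U i x) ->
    exists l : list I, forall x, K x -> exists i, In i l /\ U i x.

Definition proper_norm (N : rat -> R) : Prop :=
  is_ring_norm N /\
  forall (c : rat) (r : R), compactQ N (fun x => (N (qsub x c) <= r)).

Definition ell1_terms (N : rat -> R) (q : nat -> rat) : nat -> R :=
  fun k => (N (q k) / INR (Factorial.fact k)).

Definition in_ell1 (N : rat -> R) (q : nat -> rat) : Prop :=
  ex_series (ell1_terms N q).

Definition ell1_norm (N : rat -> R) (q : nat -> rat) : R :=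
  Series (ell1_terms N q).

Definition seq_sub (p q : nat -> rat) : nat -> rat := fun k => qsub (p k) (q k).
Definition seq_add (p q : nat -> rat) : nat -> rat := fun k => qadd (p k) (q k).
Definition seq_scale (r : rat) (q : nat -> rat) : nat -> rat := fun k => qmul r (q k).

Definition ell1_embeds_in_R (N : rat -> R) : Prop :=
  exists f : (nat -> rat) -> R,
    (forall p q, in_ell1 N p -> in_ell1 N q -> f (seq_add p q) = (f p + f q)) /\
    (forall r q, in_ell1 N q -> f (seq_scale r q) = (QtoR r * f q)) /\
    (forall p q, in_ell1 N p -> in_ell1 N q -> f p = f q -> p = q) /\
    (forall p, in_ell1 N p -> forall eps : R, (0 < eps) ->
       exists delta : R, (0 < delta) /\
         forall q, in_ell1 N q -> (ell1_norm N (seq_sub q p) < delta) ->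
           (Rabs (f q - f p) < eps)).

Definition R_embeds_in_ell1 (N : rat -> R) : Prop :=
  exists g : R -> (nat -> rat),
    (forall x, in_ell1 N (g x)) /\
    (forall x y, g (x + y) = seq_add (g x) (g y)) /\
    (forall r x, g (QtoR r * x) = seq_scale r (g x)) /\
    (forall x y, g x = g y -> x = y) /\
    (forall x eps, (0 < eps) ->
       exists delta : R, (0 < delta) /\
         forall y, (Rabs (y - x) < delta) ->
           (ell1_norm N (seq_sub (g y) (g x)) < eps)).

(* Main.v *)
Require Import Defs.
From Stdlib Require Import Reals Lra Lia Classical ClassicalEpsilon FunctionalExtensionality List ZArith Cantor.
From Coquelicot Require Import Coquelicot.
From mathcomp Require Import all_boot all_algebra Rstruct.
From mathcomp Require Import order ring.
Import Order.TTheory GRing.Theory Num.Theory.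
Set Implicit Arguments.
Unset Strict Implicit.
Open Scope R_scope.

Lemma qsub_xx (a : rat) : qsub a a = 0%R.
Proof. by rewrite /qsub subrr. Qed.
Lemma qsub_x0 (a : rat) : qsub a 0%R = a.
Proof. by rewrite /qsub oppr0 addr0. Qed.
Lemma qsub_0x (a : rat) : qsub 0%R a = (- a)%R.
Proof. by rewrite /qsub add0r. Qed.

Section Norm.
End Norm.

Lemma N0 N (HN : is_ring_norm N) : N 0%R = 0.
Proof. destruct HN as [_ [H _]]. rewrite -(qsub_xx 0). by apply H. Qed.

Lemma Nge0 N (HN : is_ring_norm N) x : 0 <= N x.
Proof. by destruct HN. Qed.

Lemma Nopp N (HN : is_ring_norm N) x : N (- x)%R = N x.
Proof. destruct HN as [_ [_ [H _]]]. by rewrite -qsub_0x H qsub_x0. Qed.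

Lemma Npos N (HN : is_ring_norm N) x : x <> 0%R -> 0 < N x.
Proof.
move=> hx. destruct HN as [H0 [H _]]. destruct (H0 x) as [h|h]; auto.
exfalso; apply hx. apply (proj1 (H x 0%R)). by rewrite qsub_x0.
Qed.

Lemma Ntri N (HN : is_ring_norm N) a b c : N (qsub a c) <= N (qsub a b) + N (qsub b c).
Proof. by destruct HN as [_ [_ [_ [H _]]]]. Qed.

Lemma Nsym N (HN : is_ring_norm N) a b : N (qsub a b) = N (qsub b a).
Proof. by destruct HN as [_ [_ [H _]]]. Qed.

Lemma Nadd N (HN : is_ring_norm N) x y : N (x + y)%R <= N x + N y.
Proof.
have := Ntri HN (x + y)%R x 0%R.
rewrite qsub_x0 qsub_x0 /qsub addrAC subrr add0r. lra.
Qed.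

Lemma Nmul N (HN : is_ring_norm N) x y : N (x * y)%R <= N x * N y.
Proof. by destruct HN as [_ [_ [_ [_ H]]]]. Qed.

Lemma Neq0 N (HN : is_ring_norm N) a b : N (qsub a b) = 0 -> a = b.
Proof. destruct HN as [_ [H _]]. apply H. Qed.
Lemma step_ok N (HN : is_ring_norm N) (c b x : rat) (r : R) :
  0 < r -> x <> 0%R -> N x < r / 2 ->
  let c' := if b == c then (c + x)%R else c in
  let r' := Rmin (N (qsub b c')) (r / 2) / 2 in
  0 < r' /\ r' < N (qsub b c') /\
  (forall y, N (qsub y c') <= r' -> N (qsub y c) <= r).
Proof.
move=> hr hx hN c' r'.
have hc' : N (qsub c' c) < r / 2.
  rewrite /c'; case: (b == c).
  - by rewrite /qsub addrAC subrr add0r.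
  - rewrite qsub_xx (N0 HN). lra.
have hbc : b <> c'.
  rewrite /c'; case: eqP => [-> | h].
  - move=> /eqP; rewrite -subr_eq0 opprD addrA subrr add0r oppr_eq0. by move/eqP.
  - exact h.
have hpos : 0 < N (qsub b c').
  have := Nge0 HN (qsub b c'). case/Rle_lt_or_eq_dec => // h.
  exfalso; apply hbc; apply (Neq0 HN); auto.
have h1 : 0 < r'.
  rewrite /r'. apply Rmin_case; lra.
have h2 : r' <= r / 4.
  rewrite /r'. have := Rmin_r (N (qsub b c')) (r/2). lra.
split; [exact h1|split].
- rewrite /r'. have := Rmin_l (N (qsub b c')) (r/2). lra.
- move=> y hy. have := Ntri HN y c' c. lra.
Qed.

Lemma max_list_ge (l : list nat) i : In i l -> (i <= fold_right Nat.max 0%nat l)%coq_nat.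
Proof. elim: l => //= a l IH [->|h]; [lia | have := IH h; lia]. Qed.

Lemma discrete N (HP : proper_norm N) :
  exists c, 0 < c /\ forall x, x <> 0%R -> c <= N x.
Proof.
destruct HP as [HN Hc].
apply NNPP => Hnot.
have Hp : forall r : R, exists x : rat, 0 < r -> x <> 0%R /\ N x < r.
  move=> r. case: (Rlt_dec 0 r) => hr; last by exists 0%R.
  apply NNPP => h. apply Hnot. exists r; split => // x hx.
  case: (Rle_dec r (N x)) => // h'. exfalso; apply h. exists x => _; split => //; lra.
pose pk := fun r => proj1_sig (constructive_indefinite_description _ (Hp r)).
have pkP : forall r, 0 < r -> pk r <> 0%R /\ N (pk r) < r.
  move=> r hr. rewrite /pk. case: constructive_indefinite_description => x /= hx. by apply hx.
pose bn := fun n : nat => odflt 0%R (unpickle n) : rat.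
pose step := fun (p : rat * R) (b : rat) =>
  let c' := if b == p.1 then (p.1 + pk (p.2 / 2))%R else p.1 in
  (c', Rmin (N (qsub b c')) (p.2 / 2) / 2).
pose s := fix s (n : nat) : rat * R := match n with O => (0%R, 1) | S n => step (s n) (bn n) end.
have hpos : forall n, 0 < (s n).2.
  elim => [|n IH]; first by simpl; lra.
  have [h1 h2] := pkP ((s n).2 / 2) ltac:(lra).
  have := @step_ok N HN (s n).1 (bn n) _ (s n).2 IH h1 h2.
  by move=> [A _].
have hs : forall n, 0 < (s n).2 /\ (s n.+1).2 < N (qsub (bn n) (s n.+1).1) /\
   (forall y, N (qsub y (s n.+1).1) <= (s n.+1).2 -> N (qsub y (s n).1) <= (s n).2).
  move=> n. have [h1 h2] := pkP ((s n).2 / 2) ltac:(have := hpos n; lra).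
  have := @step_ok N HN (s n).1 (bn n) _ (s n).2 (hpos n) h1 h2.
  move=> [A [B C]]. split; [exact (hpos n)| exact (conj B C)].
have nest : forall m n, (n <= m)%coq_nat -> forall y, N (qsub y (s m).1) <= (s m).2 -> N (qsub y (s n).1) <= (s n).2.
  elim => [|m IH] n hnm y hy.
  - have -> : n = 0%nat by lia. exact hy.
  - case: (Nat.eq_dec n m.+1) => [->//|hne].
    apply (IH n ltac:(lia)). by apply (proj2 (proj2 (hs m))).
have := Hc 0%R 1 nat (fun n y => (s n).2 < N (qsub y (s n).1)).
case.
- move=> n x hx. exists (N (qsub x (s n).1) - (s n).2). split; first lra.
  move=> y hy. have := Ntri HN x y (s n).1. rewrite (Nsym HN x y). lra.
- move=> x _. exists (pickle x).+1. have := proj1 (proj2 (hs (pickle x))).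
  by rewrite /bn pickleK.
move=> l hl.
set M := (fold_right Nat.max 0%nat l).+1.
have hM : N (qsub (s M).1 (s M).1) <= (s M).2 by rewrite qsub_xx (N0 HN); have := proj1 (hs M); lra.
have [i [hi hU]] := hl (s M).1 (nest M 0%nat ltac:(lia) _ hM).
have := nest M i ltac:(have := max_list_ge hi; rewrite /M; lia) _ hM. lra.
Qed.

Lemma ball_list N (HP : proper_norm N) (r : R) :
  exists l : list rat, forall x, N x <= r -> In x l.
Proof.
have [c [hc hd]] := discrete HP.
destruct HP as [HN Hc].
have := Hc 0%R r rat (fun i y => y = i).
case.
- move=> i x -> . exists c; split => // y hy.
  apply NNPP => hne. have : qsub y i <> 0%R.
    by rewrite /qsub => /eqP; rewrite subr_eq0 => /eqP.
  move/hd. lra.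
- move=> x _. by exists x.
move=> l hl. exists l => x hx. rewrite -(qsub_x0 x) in hx.
have [i [hi ->]] := hl x hx. exact hi.
Qed.

Lemma norm_le_numq (y : rat) : (`|y| <= (`|numq y|%N)%:R)%R.
Proof.
have h := numqE y.
have hd : (1 <= (denq y)%:~R :> rat)%R by rewrite ler1z; have := denq_gt0 y.
have -> : ((`|numq y|%N)%:R : rat) = `|(numq y)%:~R|%R.
  by rewrite -[RHS]intr_norm -abszE.
rewrite h normrM (ger0_norm (le_trans ler01 hd)).
rewrite -{1}(mulr1 `|y|%R). apply: ler_wpM2l => //.
Qed.

Lemma list_bound (l : list rat) : exists M : nat, (0 < M)%N /\
  forall x, In x l -> (M%:R * x)%R \is a Num.int /\ (`|x| <= M%:R)%R.
Proof.
elim: l => [|y l [M [hM IH]]]; first by exists 1%N.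
set dy := `|denq y|%N. set ny := `|numq y|%N.
exists (M * dy * ny.+1)%N. split.
  rewrite !muln_gt0 hM /= absz_gt0 denq_neq0 //.
move=> x [<-|hx].
- split.
  + have -> : ((M * dy * ny.+1)%:R * y = (M * ny.+1)%:R * (dy%:R * y))%R.
      rewrite !natrM. ring.
    apply: rpredM; first exact: natr_int.
    have -> : (dy%:R : rat)%R = ((denq y)%:~R)%R.
      by rewrite /dy natr_absz ger0_norm // ler0z ltW // denq_gt0.
    rewrite mulrC -numqE. exact: intr_int.
  + apply: (le_trans (norm_le_numq y)). rewrite ler_nat.
    rewrite -/ny. apply: (leq_trans (leqnSn ny)). apply: leq_pmull.
    by rewrite muln_gt0 hM absz_gt0 denq_neq0.
- have [h1 h2] := IH x hx. split.
  + have -> : ((M * dy * ny.+1)%:R * x = (dy * ny.+1)%:R * (M%:R * x))%R.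
      rewrite !natrM. ring.
    apply: rpredM; first exact: natr_int. exact h1.
  + apply: (le_trans h2). rewrite ler_nat. rewrite -mulnA. apply: leq_pmulr.
    by rewrite muln_gt0 absz_gt0 denq_neq0.
Qed.

Lemma Series_nonneg (a : nat -> R) : ex_series a -> (forall n, 0 <= a n) -> 0 <= Series a.
Proof.
move=> ha hp. have := Series_le (fun n => 0 * a n) a ltac:(move=> n; have := hp n; lra) ha.
rewrite Series_scal_l. lra.
Qed.

Lemma term_le_Series (a : nat -> R) k : ex_series a -> (forall n, 0 <= a n) -> a k <= Series a.
Proof.
move=> ha hp. rewrite (Series_incr_n a (S k) (Nat.lt_0_succ k) ha). change (Init.Nat.pred (S k)) with k.
have h1 := Series_nonneg (proj1 (ex_series_incr_n a (S k)) ha) (fun n => hp _).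
have h2 : a k <= sum_f_R0 a k.
  case: k {h1} => [|k] /=; first lra.
  have := cond_pos_sum a k hp. lra.
lra.
Qed.

Lemma ball_bound N (HP : proper_norm N) (r : R) : exists M : nat, (0 < M)%N /\
  forall x, N x <= r -> (M%:R * x)%R \is a Num.int /\ (`|x| <= M%:R)%R.
Proof.
have [l hl] := ball_list HP r. have [M [hM h]] := list_bound l.
exists M; split => // x hx. exact: h (hl x hx).
Qed.

Lemma not_R_embeds N (HP : proper_norm N) : ~ R_embeds_in_ell1 N.
Proof.
have [c [hc hd]] := discrete HP.
have HN := proj1 HP.
move=> [g [gl1 [gadd [gscal [ginj gcont]]]]].
have g0 : forall k, g 0 k = 0%R.
  move=> k. have := gadd 0 0. rewrite Rplus_0_l => /(f_equal (fun f => f k)).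
  rewrite /seq_add /qadd => /eqP. rewrite -subr_eq0 opprD addrA subrr add0r oppr_eq0.
  by move/eqP.
have [k hk] : exists k, g 1 k <> 0%R.
  apply NNPP => h. have : g 1 = g 0.
    apply functional_extensionality => k. rewrite g0. apply NNPP => h'. apply h. by exists k.
  move/ginj. lra.
have fk : 0 < INR (Factorial.fact k) by apply INR_fact_lt_0.
have [delta [hdel hcont]] := gcont 0 (c / INR (Factorial.fact k)) ltac:(apply Rdiv_lt_0_compat; lra).
have [n hn] : exists n : nat, / INR n.+1 < delta.
  have [h1 _] := archimed (/ delta).
  have hd0 : 0 < / delta by apply Rinv_0_lt_compat.
  have hz : Z.le 0 (up (/ delta)) by apply le_IZR; lra.
  exists (Z.to_nat (up (/ delta))).
  have e : INR (Z.to_nat (up (/ delta))) = IZR (up (/ delta)).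
    by rewrite INR_IZR_INZ Z2Nat.id.
  rewrite S_INR e.
  have : / (IZR (up (/ delta)) + 1) < / / delta.
    apply Rinv_lt_contravar; first (apply Rmult_lt_0_compat; lra).
    lra.
  by rewrite Rinv_inv.
set r : rat := (n.+1%:R)^-1%R.
have hr : r <> 0%R by rewrite /r; apply/eqP; rewrite invr_eq0 pnatr_eq0.
have e1 : QtoR r * 1 = / INR n.+1.
  by rewrite Rmult_1_r /QtoR /r fmorphV rmorph_nat RinvE INRE.
have := hcont (QtoR r * 1). rewrite e1 Rminus_0_r Rabs_pos_eq; last first.
  apply Rlt_le, Rinv_0_lt_compat, lt_0_INR; lia.
move/(_ hn). rewrite -e1 gscal.
have -> : Defs.seq_sub (seq_scale r (g 1)) (g 0) = seq_scale r (g 1).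
  apply functional_extensionality => j. by rewrite /Defs.seq_sub g0 qsub_x0.
move=> hlt.
have hex : in_ell1 N (seq_scale r (g 1)).
  rewrite -gscal. apply gl1.
have := term_le_Series k hex (fun n => ltac:(rewrite /ell1_terms; apply Rdiv_le_0_compat; [apply (Nge0 HN)|apply INR_fact_lt_0])).
rewrite /ell1_terms.
have : c <= N (seq_scale r (g 1) k).
  apply hd. rewrite /seq_scale /qmul. apply/eqP. rewrite mulf_eq0 negb_or. apply/andP; split; apply/eqP => //.
move=> h1 h2. rewrite /ell1_norm /ell1_terms in hlt.
have : c / INR (Factorial.fact k) <= N (seq_scale r (g 1) k) / INR (Factorial.fact k).
  apply Rmult_le_compat_r => //. apply Rlt_le, Rinv_0_lt_compat => //.
lra.
Qed.

Fixpoint Eseq (G : nat -> nat) (j : nat) : nat :=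
  match j with
  | O => G O
  | S i => (Eseq G i * Eseq G i * G (S i) * 4 ^ (S i) * (S i).+1)%N
  end.

Lemma Eseq_pos G (hG : forall j, (0 < G j)%N) j : (0 < Eseq G j)%N.
Proof. elim: j => [|j IH] /=; first exact: hG. by rewrite !muln_gt0 IH hG expn_gt0. Qed.

Lemma Eseq_dvd G i j : (i <= j)%N -> (Eseq G i %| Eseq G j)%N.
Proof.
move=> hij. elim: j hij => [|j IH]; first by rewrite leqn0 => /eqP ->.
rewrite leq_eqVlt => /orP [/eqP -> //|]. rewrite ltnS => h.
apply: (dvdn_trans (IH h)) => /=. by rewrite -!mulnA dvdn_mulr.
Qed.

Lemma Eseq_G G (hG : forall j, (0 < G j)%N) j : (G j * 4 ^ j <= Eseq G j)%N.
Proof.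
case: j => [|j] /=; first by rewrite expn0 muln1.
rewrite -!mulnA mulnA. apply: (leq_trans _ (leq_pmull _ _)); last by rewrite muln_gt0 !Eseq_pos.
rewrite mulnA. by apply: leq_pmulr.
Qed.

Lemma Eseq_mono G (hG : forall j, (0 < G j)%N) i j : (i <= j)%N -> (Eseq G i <= Eseq G j)%N.
Proof. move=> h. apply: dvdn_leq; [exact: Eseq_pos | exact: Eseq_dvd]. Qed.

Lemma Eseq_big G (hG : forall j, (0 < G j)%N) J j : (J < j)%N ->
  (Eseq G J * G J * G j * 4 ^ j * j.+1 <= Eseq G j)%N.
Proof.
case: j => [//|j]; rewrite ltnS => hJ /=.
rewrite -!mulnA. apply: leq_mul; first exact: Eseq_mono.
rewrite !mulnA. apply: leq_mul => //. apply: leq_mul => //. apply: leq_mul => //.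
apply: (leq_trans _ (Eseq_mono hG hJ)). apply: (leq_trans _ (Eseq_G hG J)).
by rewrite leq_pmulr // expn_gt0.
Qed.

Definition Mb N (HP : proper_norm N) (r : R) : nat :=
  proj1_sig (constructive_indefinite_description _ (ball_bound HP r)).
Lemma MbP N (HP : proper_norm N) r : (0 < Mb HP r)%N /\
  forall x, N x <= r -> ((Mb HP r)%:R * x)%R \is a Num.int /\ (`|x| <= (Mb HP r)%:R)%R.
Proof. exact: (proj2_sig (constructive_indefinite_description _ (ball_bound HP r))). Qed.

Definition Gf N (HP : proper_norm N) (j : nat) : nat := Mb HP (INR (Factorial.fact j)).
Lemma Gf_pos N (HP : proper_norm N) j : (0 < Gf HP j)%N.
Proof. exact: (proj1 (MbP HP _)). Qed.
Definition Ef N (HP : proper_norm N) := Eseq (Gf HP).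
Definition pi (j : nat) : nat := fst (Cantor.of_nat j).
Definition qt N (HP : proper_norm N) (d : nat -> rat) (j : nat) : rat :=
  (d (pi j) / (Ef HP j)%:R)%R.
Definition fe N (HP : proper_norm N) (d : nat -> rat) : R :=
  Series (fun j => QtoR (qt HP d j)).

Lemma pi_le j : (pi j <= j)%coq_nat.
Proof.
rewrite /pi. rewrite -{2}(Cantor.cancel_to_of j). case: (Cantor.of_nat j) => x y.
have := Cantor.to_nat_non_decreasing x y. simpl fst. move=> h. apply: Nat.le_trans h. lia.
Qed.

Lemma pi_hit k J : exists j, (J < j)%coq_nat /\ pi j = k.
Proof.
exists (Cantor.to_nat (k, S J)). rewrite /pi Cantor.cancel_of_to. split => //.
have := Cantor.to_nat_non_decreasing k (S J). lia.
Qed.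

Lemma ell1_tail N (d : nat -> rat) : in_ell1 N d ->
  exists K0, forall k, (K0 <= k)%coq_nat -> N (d k) <= INR (Factorial.fact k).
Proof.
move=> h. have := ex_series_lim_0 _ h. move/is_lim_seq_spec => /(_ (mkposreal 1 Rlt_0_1)).
case=> K0 hK. exists K0 => k hk. have := hK k hk. rewrite /ell1_terms Rminus_0_r /=.
have hf := INR_fact_lt_0 k.
move=> h1. have h2 := Rle_abs (N (d k) / INR (Factorial.fact k)).
have : N (d k) / INR (Factorial.fact k) < 1 by lra.
move=> h3. apply Rlt_le. apply (Rmult_lt_reg_r (/ INR (Factorial.fact k))).
  by apply Rinv_0_lt_compat.
rewrite Rinv_r; [lra | lra].
Qed.

Lemma fact_le_INR k j : (k <= j)%coq_nat -> INR (Factorial.fact k) <= INR (Factorial.fact j).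
Proof. move=> h. apply le_INR. by apply Factorial.fact_le. Qed.

Lemma int_scale (a b : nat) (x : rat) : (a%:R * x)%R \is a Num.int -> ((a * b)%:R * x)%R \is a Num.int.
Proof. move=> h. rewrite natrM (mulrC (a%:R)%R) -mulrA. apply: rpredM => //. exact: natr_int. Qed.

Lemma d_bound N (HP : proper_norm N) (d : nat -> rat) : in_ell1 N d ->
  exists M0 : nat, (0 < M0)%N /\ forall j k, (k <= j)%coq_nat ->
   ((M0 * Gf HP j)%:R * d k)%R \is a Num.int /\ (`|d k| <= (M0 * Gf HP j)%:R)%R.
Proof.
move=> hd. have [K0 hK] := ell1_tail hd.
have [M0 [hM0 hl]] := list_bound (List.map d (List.seq 0 K0)).
exists M0; split => // j k hkj.
have hG := Gf_pos HP j.
case: (Nat.lt_ge_cases k K0) => hk.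
- have [h1 h2] := hl (d k) (in_map d _ k ltac:(apply in_seq; split; [apply Nat.le_0_l | exact hk])).
  split; first exact: int_scale.
  apply: (le_trans h2). rewrite ler_nat. exact: leq_pmulr.
- have [_ hb] := MbP HP (INR (Factorial.fact j)).
  have [h1 h2] := hb (d k) (Rle_trans _ _ _ (hK k hk) (fact_le_INR hkj)).
  split; first by rewrite mulnC; exact: int_scale.
  apply: (le_trans h2). rewrite ler_nat. exact: leq_pmull.
Qed.

Lemma QtoR_le (x y : rat) : (x <= y)%R -> QtoR x <= QtoR y.
Proof. move=> h. apply/RleP. by rewrite /QtoR ler_rat. Qed.

Lemma QtoR_abs (x : rat) : Rabs (QtoR x) = QtoR `|x|%R.
Proof. by rewrite /QtoR RabsE ratr_norm. Qed.

Lemma QtoR_nat n : QtoR (n%:R)%R = INR n.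
Proof. by rewrite /QtoR ratr_nat INRE. Qed.

Lemma QtoR_add x y : QtoR (x + y)%R = QtoR x + QtoR y.
Proof. by rewrite /QtoR rmorphD RplusE. Qed.

Lemma QtoR_mul x y : QtoR (x * y)%R = QtoR x * QtoR y.
Proof. by rewrite /QtoR rmorphM RmultE. Qed.

Lemma QtoR_opp x : QtoR (- x)%R = - QtoR x.
Proof. by rewrite /QtoR rmorphN RoppE. Qed.

Lemma QtoR_divn x n : (0 < n)%N -> QtoR (x / n%:R)%R = QtoR x / INR n.
Proof.
move=> hn. rewrite QtoR_mul /QtoR fmorphV rmorph_nat -INRE -RinvE. done.
Qed.

Lemma QtoR_int0 (z : rat) : z \is a Num.int -> Rabs (QtoR z) < 1 -> z = 0%R.
Proof.
move=> hz h. apply/eqP; apply/negP => hn.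
have := norm_intr_ge1 hz (introT negP hn). move/QtoR_le. rewrite -QtoR_abs.
have -> : QtoR 1 = 1 by rewrite /QtoR rmorph1.
lra.
Qed.

Lemma geom_bound (a : nat -> R) C : (forall j, Rabs (a j) <= C * (1/2)^j) ->
  ex_series a /\ Rabs (Series a) <= 2 * C.
Proof.
move=> h.
have hg : is_series (fun j => C * (1/2)^j) (C * / (1 - 1/2)).
  apply: is_series_scal_l. apply: is_series_geom. rewrite Rabs_pos_eq; lra.
have hb : ex_series (fun j => C * (1/2)^j) by eexists; exact hg.
have ha : ex_series (fun j => Rabs (a j)).
  apply: (ex_series_le _ _ _ hb) => n. rewrite /norm /= /abs /= Rabs_Rabsolu. exact: h.
split; first exact: ex_series_Rabs.
apply: (Rle_trans _ _ _ (Series_Rabs _ ha)).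
have := Series_le (fun n => Rabs (a n)) (fun j => C * (1/2)^j) ltac:(move=> n; split; [apply Rabs_pos | apply h]) hb.
rewrite (is_series_unique _ _ hg).
have -> : / (1 - 1/2) = 2 by rewrite (_ : 1 - 1/2 = / 2); [rewrite Rinv_inv | lra].
lra.
Qed.

Lemma INR_muln a b : INR (a * b)%N = INR a * INR b.
Proof. by rewrite !INRE natrM RmultE. Qed.

Lemma le_INRn a b : (a <= b)%N -> INR a <= INR b.
Proof. move=> h. apply le_INR. exact/ssrnat.leP. Qed.

Lemma INR_4pow j : INR (4 ^ j)%N = 4 ^ j.
Proof. elim: j => [|j IH]; first reflexivity. rewrite expnS INR_muln IH /=. lra. Qed.

Lemma ratio_le a m e : (a * m <= e)%N -> (0 < m)%N -> (0 < e)%N -> INR a / INR e <= / INR m.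
Proof.
move=> h hm he.
have hm' : 0 < INR m by apply lt_0_INR; apply/ssrnat.ltP.
have he' : 0 < INR e by apply lt_0_INR; apply/ssrnat.ltP.
have := le_INRn h. rewrite INR_muln => h1.
rewrite /Rdiv. apply (Rmult_le_reg_r (INR e * INR m)); first nra.
have -> : INR a * / INR e * (INR e * INR m) = INR a * INR m * (INR e * / INR e) by ring_simplify.
have -> : / INR m * (INR e * INR m) = INR e * (INR m * / INR m) by ring_simplify.
rewrite !Rinv_r; lra.
Qed.

Lemma inv4pow j : / INR (4 ^ j)%N = (1/4)^j.
Proof. rewrite INR_4pow Rinv_pow; last lra. f_equal. lra. Qed.

Lemma ratio_le2 x y m e : (y * m <= e)%N -> (0 < m)%N -> (0 < e)%N ->
  INR (x * y)%N / INR e <= INR x / INR m.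
Proof.
move=> h hm he. have := ratio_le h hm he. rewrite INR_muln /Rdiv => h1.
have hx := pos_INR x.
rewrite Rmult_assoc. apply Rmult_le_compat_l => //.
Qed.

Lemma Ef_pos N (HP : proper_norm N) j : (0 < Ef HP j)%N.
Proof. apply: Eseq_pos. exact: Gf_pos. Qed.

Lemma qt_abs N (HP : proper_norm N) d M0 :
  (forall j k, (k <= j)%coq_nat -> (`|d k| <= (M0 * Gf HP j)%:R)%R) ->
  forall j, Rabs (QtoR (qt HP d j)) <= INR (M0 * Gf HP j)%N / INR (Ef HP j).
Proof.
move=> hb j. rewrite /qt QtoR_divn; last exact: Ef_pos.
have he : 0 < INR (Ef HP j) by apply lt_0_INR; apply/ssrnat.ltP; exact: Ef_pos.
rewrite /Rdiv Rabs_mult Rabs_inv (Rabs_pos_eq (INR _)); last lra.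
apply Rmult_le_compat_r; first by apply Rlt_le, Rinv_0_lt_compat.
rewrite QtoR_abs -QtoR_nat. apply QtoR_le. exact: hb (pi_le j).
Qed.

Lemma qt_geom N (HP : proper_norm N) d M0 :
  (forall j k, (k <= j)%coq_nat -> (`|d k| <= (M0 * Gf HP j)%:R)%R) ->
  forall j, Rabs (QtoR (qt HP d j)) <= INR M0 * (1/2)^j.
Proof.
move=> hb j. apply: (Rle_trans _ _ _ (qt_abs hb j)).
apply: (Rle_trans _ _ _ (ratio_le2 M0 (Eseq_G (Gf_pos HP) j) _ (Ef_pos HP j))).
  by rewrite expn_gt0.
rewrite /Rdiv inv4pow. apply Rmult_le_compat_l; first exact: pos_INR.
apply pow_incr. lra.
Qed.

Lemma fe_ex N (HP : proper_norm N) d : in_ell1 N d -> ex_series (fun j => QtoR (qt HP d j)).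
Proof.
move=> hd. have [M0 [hM0 hb]] := d_bound HP hd.
exact: (proj1 (geom_bound (qt_geom (fun j k h => proj2 (hb j k h))))).
Qed.

Lemma ell1_sub N (HN : is_ring_norm N) p q : in_ell1 N p -> in_ell1 N q -> in_ell1 N (Defs.seq_sub p q).
Proof.
move=> hp hq. rewrite /in_ell1.
have hs : ex_series (fun k => ell1_terms N p k + ell1_terms N q k) by apply: ex_series_plus.
apply: (ex_series_le _ _ _ hs) => k. rewrite /norm /= /abs /= /ell1_terms /Defs.seq_sub.
have hf := INR_fact_lt_0 k.
have h0 := Nge0 HN (qsub (p k) (q k)).
rewrite Rabs_pos_eq; last by apply Rdiv_le_0_compat.
have : N (qsub (p k) (q k)) <= N (p k) + N (q k).
  have := Nadd HN (p k) (- q k)%R. by rewrite Nopp.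
move=> h. rewrite /Rdiv -Rmult_plus_distr_r. apply Rmult_le_compat_r => //.
by apply Rlt_le, Rinv_0_lt_compat.
Qed.

Lemma fe_add N (HP : proper_norm N) p q : in_ell1 N p -> in_ell1 N q ->
  fe HP (seq_add p q) = fe HP p + fe HP q.
Proof.
move=> hp hq. rewrite /fe -Series_plus; try exact: fe_ex.
apply Series_ext => j. by rewrite /qt /seq_add /qadd mulrDl QtoR_add.
Qed.

Lemma fe_sub N (HP : proper_norm N) p q : in_ell1 N p -> in_ell1 N q ->
  fe HP (Defs.seq_sub p q) = fe HP p - fe HP q.
Proof.
move=> hp hq. rewrite /fe -Series_minus; try exact: fe_ex.
apply Series_ext => j. by rewrite /qt /Defs.seq_sub /qsub mulrDl QtoR_add mulNr QtoR_opp.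
Qed.

Lemma fe_scale N (HP : proper_norm N) r q : fe HP (seq_scale r q) = QtoR r * fe HP q.
Proof.
rewrite /fe -Series_scal_l.
apply Series_ext => j. by rewrite /qt /seq_scale /qmul -mulrA QtoR_mul.
Qed.

Lemma sum_QtoR (f : nat -> rat) J :
  sum_f_R0 (fun j => QtoR (f j)) J = QtoR (\sum_(0 <= j < J.+1) f j)%R.
Proof.
elim: J => [|J IH]; first by rewrite big_nat1.
rewrite big_nat_recr // QtoR_add -IH. reflexivity.
Qed.

Lemma int_partial N (HP : proper_norm N) d M0 :
  (forall j k, (k <= j)%coq_nat -> ((M0 * Gf HP j)%:R * d k)%R \is a Num.int) ->
  forall J, (((M0 * Gf HP J * Ef HP J)%N)%:R * \sum_(0 <= j < J.+1) qt HP d j)%R \is a Num.int.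
Proof.
move=> hb J. rewrite big_mkord mulr_sumr. apply: rpred_sum => [[j hj]] _ /=.
have hjJ : (j <= J)%N by rewrite -ltnS.
have hdv := Eseq_dvd (Gf HP) hjJ.
have hE : ((Ef HP j)%:R : rat)%R != 0%R by rewrite pnatr_eq0 -lt0n Ef_pos.
rewrite /qt /Ef -(divnK hdv) !natrM.
have -> : ((M0%:R * (Gf HP J)%:R * ((Eseq (Gf HP) J %/ Eseq (Gf HP) j)%:R * (Eseq (Gf HP) j)%:R)) *
   (d (pi j) / (Eseq (Gf HP) j)%:R) =
   ((M0 * Gf HP J)%:R * d (pi j)) * (Eseq (Gf HP) J %/ Eseq (Gf HP) j)%:R :> rat)%R.
  rewrite natrM. field. exact hE.
apply: rpredM; last exact: natr_int.
apply: hb. have := pi_le j. move/ssrnat.leP: hjJ. lia.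
Qed.

Lemma tail_term N (HP : proper_norm N) d M0 J :
  (forall j k, (k <= j)%coq_nat -> (`|d k| <= (M0 * Gf HP j)%:R)%R) ->
  forall n, Rabs (INR (M0 * Gf HP J * Ef HP J)%N * QtoR (qt HP d (S J + n)%coq_nat))
    <= INR (M0 * M0)%N / INR (S J) * (1/2)^n.
Proof.
move=> hb n. set j := (S J + n)%coq_nat.
have hJj : (J < j)%N by apply/ssrnat.ltP; rewrite /j; lia.
rewrite Rabs_mult (Rabs_pos_eq (INR _)); last exact: pos_INR.
apply: (Rle_trans _ (INR (M0 * Gf HP J * Ef HP J)%N * (INR (M0 * Gf HP j)%N / INR (Ef HP j)))).
  apply Rmult_le_compat_l; [exact: pos_INR | exact: qt_abs].
rewrite /Rdiv -Rmult_assoc -INR_muln.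
have -> : ((M0 * Gf HP J * Ef HP J) * (M0 * Gf HP j) =
   (M0 * M0) * (Ef HP J * Gf HP J * Gf HP j))%N by ring.
have hbig := Eseq_big (Gf_pos HP) hJj.
have h4 : (0 < 4 ^ j * j.+1)%N by rewrite muln_gt0 expn_gt0.
have := ratio_le2 (M0 * M0) (y := Ef HP J * Gf HP J * Gf HP j) (m := (4 ^ j * j.+1)%N) (e := Ef HP j)
  ltac:(by rewrite mulnA) h4 (Ef_pos HP j).
rewrite /Rdiv => h1. apply: (Rle_trans _ _ _ h1).
rewrite Rmult_assoc. apply Rmult_le_compat_l; first exact: pos_INR.
rewrite INR_muln INR_4pow.
have hJ : 0 < INR (S J) by apply lt_0_INR; lia.
have hjj : INR (S J) <= INR j.+1 by apply le_INR; rewrite /j; lia.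
have h2 : 2 ^ n <= 4 ^ j.
  apply (Rle_trans _ (4 ^ n)); first (apply pow_incr; lra).
  apply Rle_pow; [lra | rewrite /j; lia].
have h2p : 0 < 2 ^ n by apply pow_lt; lra.
rewrite (_ : (1/2)^n = / 2^n); last by rewrite Rinv_pow; [f_equal; lra | lra].
rewrite -Rinv_mult. apply Rinv_le_contravar; first nra.
nra.
Qed.

Lemma fe_inj0 N (HP : proper_norm N) d : in_ell1 N d -> fe HP d = 0 -> forall k, d k = 0%R.
Proof.
move=> hd h0.
have [M0 [hM0 hb]] := d_bound HP hd.
have hb1 := fun j k h => proj1 (hb j k h).
have hb2 := fun j k h => proj2 (hb j k h).
have hex := fe_ex HP hd.
have key : forall J, (2 * M0 * M0 <= J)%coq_nat -> (\sum_(0 <= j < J.+1) qt HP d j)%R = 0%R.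
  move=> J hJ.
  set MJ := (M0 * Gf HP J * Ef HP J)%N.
  have hint := int_partial hb1 J.
  have hsplit := Series_incr_n _ (S J) (Nat.lt_0_succ J) hex.
  change (Init.Nat.pred (S J)) with J in hsplit.
  rewrite sum_QtoR in hsplit.
  have gb := geom_bound (@tail_term N HP d M0 J hb2).
  rewrite Series_scal_l in gb. case: gb => _ gb.
  set T := Series (fun k => QtoR (qt HP d (S J + k)%coq_nat)) in hsplit gb.
  have hMJ : 0 < INR MJ by apply lt_0_INR; apply/ssrnat.ltP; rewrite /MJ !muln_gt0 hM0 Gf_pos Ef_pos.
  have hJ' : 2 * (INR (M0 * M0)%N / INR (S J)) < 1.
    have hSJ : 0 < INR (S J) by apply lt_0_INR; lia.
    have h : INR (2 * (M0 * M0))%N < INR (S J).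
      apply lt_INR. apply/ssrnat.ltP. move/ssrnat.leP: hJ. rewrite -mulnA. by [].
    rewrite INR_muln (_ : INR 2 = 2) in h; last by simpl; lra.
    apply (Rmult_lt_reg_r (INR (S J))) => //. rewrite Rmult_1_l /Rdiv -Rmult_assoc Rmult_assoc Rinv_l; lra.
  have hz := QtoR_int0 hint.
  have : (MJ%:R * (\sum_(0 <= j < J.+1) qt HP d j))%R = 0%R.
    apply: hz. rewrite QtoR_mul QtoR_nat.
    have -> : QtoR (\sum_(0 <= j < J.+1) qt HP d j) = - T.
      rewrite /fe in h0. lra.
    rewrite Ropp_mult_distr_r_reverse Rabs_Ropp. lra.
  move/eqP. rewrite mulf_eq0 pnatr_eq0 eqn0Ngt /MJ !muln_gt0 hM0 Gf_pos Ef_pos /=.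
  by move/eqP.
move=> k. have [j [hj hpi]] := pi_hit k (2 * M0 * M0).
case: j hj hpi => [|j] hj hpi; first lia.
have e1 := key j ltac:(lia). have e2 := key j.+1 ltac:(lia).
rewrite big_nat_recr // in e2. rewrite e1 in e2.
have e3 : qt HP d j.+1 = 0%R by rewrite -[LHS]add0r; exact e2.
rewrite /qt hpi in e3.
move/eqP: e3. rewrite mulf_eq0 invr_eq0 pnatr_eq0 eqn0Ngt Ef_pos orbF. by move/eqP.
Qed.

Lemma half_pow_le K j : (K <= j)%coq_nat -> (1/2)^j <= (1/2)^K.
Proof.
move=> h. rewrite -(Nat.sub_add K j h) pow_add.
have h1 : (1/2)^((j - K)%coq_nat) <= 1.
  apply (Rle_trans _ (1^((j - K)%coq_nat))); [apply pow_incr; lra | rewrite pow1; lra].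
have h2 : 0 <= (1/2)^K by apply pow_le; lra.
nra.
Qed.

Lemma fe_cont N (HP : proper_norm N) p : in_ell1 N p -> forall eps : R, 0 < eps ->
  exists delta : R, 0 < delta /\ forall q, in_ell1 N q -> ell1_norm N (Defs.seq_sub q p) < delta ->
    Rabs (fe HP q - fe HP p) < eps.
Proof.
move=> hp eps heps.
have [c [hc hdisc]] := discrete HP.
have HN := proj1 HP.
have [K hK] := pow_lt_1_zero (1/2) ltac:(rewrite Rabs_pos_eq; lra) (eps / 2) ltac:(lra).
have hK' := hK K (le_n K). rewrite Rabs_pos_eq in hK'; last by apply pow_le; lra.
have hfK := INR_fact_lt_0 K.
exists (Rmin 1 (c / INR (Factorial.fact K))). split.
  apply Rmin_case; first lra. by apply Rdiv_lt_0_compat.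
move=> q hq hn.
have hd := ell1_sub HN hq hp.
rewrite -fe_sub //.
set d := Defs.seq_sub q p in hd hn *.
have hterm : forall k, N (d k) < Rmin 1 (c / INR (Factorial.fact K)) * INR (Factorial.fact k).
  move=> k. have hf := INR_fact_lt_0 k.
  have := term_le_Series k hd (fun n => ltac:(rewrite /ell1_terms; apply Rdiv_le_0_compat; [apply (Nge0 HN)|apply INR_fact_lt_0])).
  rewrite /ell1_terms => h1. rewrite /ell1_norm /ell1_terms in hn.
  have h2 : N (d k) / INR (Factorial.fact k) < Rmin 1 (c / INR (Factorial.fact K)) by lra.
  apply (Rmult_lt_reg_r (/ INR (Factorial.fact k))); first by apply Rinv_0_lt_compat.
  rewrite Rmult_assoc Rinv_r; lra.
have hball : forall k, N (d k) <= INR (Factorial.fact k).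
  move=> k. have := hterm k. have := Rmin_l 1 (c / INR (Factorial.fact K)).
  have := INR_fact_lt_0 k. nra.
have hzero : forall k, (k <= K)%coq_nat -> d k = 0%R.
  move=> k hk. apply NNPP => hne. have := hdisc _ hne.
  have := hterm k. have := Rmin_r 1 (c / INR (Factorial.fact K)).
  have := fact_le_INR hk. have := INR_fact_lt_0 k.
  move=> h1 h2 h3 h4 h5.
  have : c / INR (Factorial.fact K) * INR (Factorial.fact k) <= c.
    apply (Rmult_le_reg_r (/ INR (Factorial.fact k))); first by apply Rinv_0_lt_compat.
    rewrite Rmult_assoc Rinv_r; last lra. rewrite Rmult_1_r /Rdiv.
    apply Rmult_le_compat_l; first lra. apply Rinv_le_contravar; lra.
  nra.
have hb : forall j k, (k <= j)%coq_nat -> (`|d k| <= (1 * Gf HP j)%:R)%R.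
  move=> j k hkj. rewrite mul1n. have [_ hb] := MbP HP (INR (Factorial.fact j)).
  exact: proj2 (hb (d k) (Rle_trans _ _ _ (hball k) (fact_le_INR hkj))).
have hgeom : forall j, Rabs (QtoR (qt HP d j)) <= (1/2)^K * (1/2)^j.
  move=> j. case: (Nat.le_gt_cases (pi j) K) => hpj.
  - rewrite /qt hzero // mul0r /QtoR rmorph0 Rabs_R0.
    apply Rmult_le_pos; apply pow_le; lra.
  - apply: (Rle_trans _ _ _ (qt_abs hb j)).
    apply: (Rle_trans _ _ _ (ratio_le2 1 (Eseq_G (Gf_pos HP) j) _ (Ef_pos HP j))).
      by rewrite expn_gt0.
    rewrite /Rdiv inv4pow.
    have -> : (1/4)^j = (1/2)^j * (1/2)^j by rewrite -Rpow_mult_distr; f_equal; lra.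
    have e : INR 1 = 1 by reflexivity. rewrite e.
    have h1 : (1/2)^j <= (1/2)^K by apply half_pow_le; have := pi_le j; lia.
    have h2 : 0 <= (1/2)^j by apply pow_le; lra.
    nra.
have [_ hg] := geom_bound hgeom.
rewrite /fe. lra.
Qed.

Theorem mainTheorem15 (N : rat -> R) (HN : proper_norm N) :
  ell1_embeds_in_R N /\ ~ R_embeds_in_ell1 N.
Proof.
split; last exact: not_R_embeds.
exists (fe HN). split; [|split; [|split]].
- move=> p q hp hq. exact: fe_add.
- move=> r q _. exact: fe_scale.
- move=> p q hp hq he.
  have hd := ell1_sub (proj1 HN) hp hq.
  have h0 : fe HN (Defs.seq_sub p q) = 0 by rewrite fe_sub // he; lra.
  have hz := fe_inj0 hd h0.
  apply functional_extensionality => k. have := hz k.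
  rewrite /Defs.seq_sub /qsub. by move/eqP; rewrite subr_eq0 => /eqP.
- move=> p hp eps heps. exact: fe_cont.
Qed.
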